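(* Let $W_n$ be the wheel graph on $n\geq 4$ vertices, i.e. a cycle on $n-1$ vertices together with one additional vertex adjacent to all of them. Let $c_0:V(W_n)\to\mathbb{Z}$ be any initial chip configuration. Then the sequence of configurations $(c_t)_{t\ge0}$ produced by the diffusion process is eventually periodic, i.e. there exist $t\geq 0$ and $p\geq 1$ with $c_{t+p}=c_t$.
   Context: Diffusion process: for a finite simple graph $G$ and a chip configuration $c_t:V(G)\to\mathbb{Z}$ (negative values allowed), the next configuration is defined simultaneously for every vertex $u$ by $c_{t+1}(u)=c_t(u)-|\{w\in N(u): c_t(u)>c_t(w)\}|+|\{w\in N(u): c_t(u)<c_t(w)\}|$. *)

(* Defs.v *)
From mathcomp Require Import all_boot all_order all_algebra.
Set Implicit Arguments. Unset Strict Implicit. Unset Printing Implicit Defensive.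
Import Order.TTheory GRing.Theory Num.Theory.
Local Open Scope ring_scope.

Definition simple_graph (V : finType) (e : rel V) : Prop :=
  symmetric e /\ irreflexive e.

Definition diffusion_step (V : finType) (e : rel V) (c : {ffun V -> int})
  : {ffun V -> int} :=
  [ffun u => c u - (#|[set w | e u w && (c w < c u)]|)%:Z
                 + (#|[set w | e u w && (c u < c w)]|)%:Z].

Definition diffusion (V : finType) (e : rel V) (c0 : {ffun V -> int}) (t : nat)
  : {ffun V -> int} := iter t (diffusion_step e) c0.

(* Wheel graph W_n on vertex set 'I_n (intended n >= 4): vertices 0..n-2 form
   the cycle C_{n-1} (i ~ j iff j = i+1 or i = j+1 mod (n-1)), and vertex n-1
   (the hub) is adjacent to all other vertices. *)
Definition wheel_adj (n : nat) : rel 'I_n := fun i j =>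
  let h := n.-1 in
  if (i == h :> nat) then (j != h :> nat)
  else if (j == h :> nat) then true
  else ((((i.+1 %% h)%N == j) || ((j.+1 %% h)%N == i)) && (i != j :> nat))%N.

(* Main.v *)
Require Import Defs.
From mathcomp Require Import all_boot all_order all_algebra.
From mathcomp Require Import zify ring lra.
Set Implicit Arguments. Unset Strict Implicit. Unset Printing Implicit Defensive.
Import Order.TTheory GRing.Theory Num.Theory.
Local Open Scope ring_scope.
From Stdlib Require Import Classical.

Definition sgi (a b : int) : int := if a < b then 1 else if b < a then -1 else 0.
Definition fl (V : finType) (e : rel V) (c : {ffun V -> int}) (u : V) : int :=
  \sum_w (if e u w then sgi (c u) (c w) else 0).
Definition En (V : finType) (c : {ffun V -> int}) : int := \sum_u c u ^+ 2.
Definition Tv (V : finType) (e : rel V) (c : {ffun V -> int}) : int :=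
  \sum_u \sum_w (if e u w then `|c u - c w| else 0).
Definition Sm (V : finType) (c : {ffun V -> int}) : int := \sum_u c u.

Lemma card_sumz (V : finType) (P : pred V) :
  (#|[set w | P w]|)%:Z = \sum_w ((P w : nat)%:Z).
Proof.
rewrite -sum1dep_card big_mkcond /=.
rewrite (big_morph Posz PoszD (erefl 0%:Z)).
by apply: eq_bigr => w _; case: (P w).
Qed.

Lemma step_fl (V : finType) (e : rel V) (c : {ffun V -> int}) u :
  diffusion_step e c u = c u + fl e c u.
Proof.
rewrite ffunE !card_sumz /fl -addrA; congr (_ + _).
rewrite -sumrN -big_split /=; apply: eq_bigr => w _.
rewrite /sgi; case: (e u w) => /=; last by rewrite oppr0 add0r.
case: ltgtP => //= _; lia.
Qed.

Lemma swap_sum (V : finType) (H : V -> V -> int) :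
  \sum_u \sum_w H u w = \sum_u \sum_w H w u.
Proof. exact: exchange_big. Qed.

Lemma sum_fl (V : finType) (e : rel V) (es : symmetric e) (c : {ffun V -> int}) :
  \sum_u fl e c u = 0.
Proof.
rewrite /fl.
set X := \sum_u _.
have HX : X = - X.
  rewrite {1}/X swap_sum -sumrN; apply: eq_bigr => u _.
  rewrite -sumrN; apply: eq_bigr => w _.
  rewrite es; case: (e u w); last by rewrite oppr0.
  rewrite /sgi; case: ltgtP => //= _; lia.
lia.
Qed.

Lemma step_sum (V : finType) (e : rel V) (es : symmetric e) (c : {ffun V -> int}) :
  Sm (diffusion_step e c) = Sm c.
Proof.
rewrite /Sm; under eq_bigr => u _ do rewrite step_fl.
by rewrite big_split /= sum_fl // addr0.
Qed.

Lemma energy_id (V : finType) (e : rel V) (es : symmetric e) (c : {ffun V -> int}) :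
  2 * \sum_u c u * fl e c u = - Tv e c.
Proof.
rewrite /fl.
under eq_bigr => u _ do rewrite mulr_sumr.
set X := \sum_u _.
have -> : 2 * X = X + X by rewrite mulr2n mulrDl mul1r.
rewrite {1}/X swap_sum /X -big_split /Tv -sumrN; apply: eq_bigr => u _.
rewrite -big_split -sumrN; apply: eq_bigr => w _ /=.
rewrite es; case: (e u w); last by rewrite !mulr0 addr0 oppr0.
rewrite /sgi; case: ltgtP => //= H.
all: first [ (rewrite gtr0_norm ?subr_gt0 //; lia) | (rewrite ltr0_norm ?subr_lt0 //; lia) | (rewrite H subrr normr0; lia) ].
Qed.

Lemma fl_bound (V : finType) (e : rel V) (c : {ffun V -> int}) u : `|fl e c u| <= #|V|%:Z.
Proof.
rewrite /fl; apply: le_trans (ler_norm_sum _ _ _) _.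
apply: le_trans (_ : \sum_(w : V) (1 : int) <= _).
  apply: ler_sum => w _; case: (e u w); rewrite ?normr0 //.
  rewrite /sgi; case: ltgtP => //.
by rewrite sumr_const natz.
Qed.

Lemma energy_step (V : finType) (e : rel V) (es : symmetric e) (c : {ffun V -> int}) :
  En (diffusion_step e c) <= En c - Tv e c + (#|V|%:Z) ^+ 3.
Proof.
rewrite /En.
under eq_bigr => u _ do rewrite step_fl.
have E1 : forall u, (c u + fl e c u) ^+ 2 = c u ^+ 2 + 2 * (c u * fl e c u) + fl e c u ^+ 2.
  move=> u; ring.
under eq_bigr => u _ do rewrite E1.
rewrite !big_split /= -mulr_sumr energy_id //.
rewrite lerD2l.
apply: le_trans (_ : \sum_(w : V) (#|V|%:Z)^+2 <= _).
  apply: ler_sum => u _; have := fl_bound e c u; set f := fl e c u; set k := #|V|%:Z.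
  move=> H; have : -k <= f <= k by rewrite -ler_norml.
  move=> /andP [H1 H2]; nia.
rewrite sumr_const -mulr_natr natz -exprSr; by []...
Qed.
Lemma pigeon (V : finType) (f : nat -> {ffun V -> int}) (N : nat) :
  (forall t u, `|f t u| <= N%:Z) -> exists i j, (i < j)%N /\ f i = f j.
Proof.
move=> Hb.
apply: NNPP => H.
pose K := #|{ffun V -> 'I_(N + N).+1}|.
pose F := fun i : 'I_K.+1 => [ffun u => (inord (absz (f i u + N%:Z)) : 'I_(N + N).+1)].
have Finj : injective F.
  move=> i j Hij.
  have fe : f i = f j.
    apply/ffunP => u; have := congr1 (fun g : {ffun V -> 'I_(N + N).+1} => nat_of_ord (g u)) Hij.
    have := Hb i u; have := Hb j u => Hj Hi.
    rewrite /F /= !ffunE !inordK; try lia.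
  case: (ltngtP i j) => Hc.
  - by case: H; exists i, j.
  - by case: H; exists j, i.
  - exact: val_inj.
have := @leq_card _ _ F Finj; by rewrite card_ord /K ltnn.
Qed.
Lemma single_le (V : finType) (F : V -> int) i :
  (forall j, 0 <= F j) -> F i <= \sum_j F j.
Proof.
move=> H; rewrite (bigD1 i) //= lerDl; exact: sumr_ge0.
Qed.

Lemma Tv_ge0 (V : finType) (e : rel V) (c : {ffun V -> int}) : 0 <= Tv e c.
Proof.
apply: sumr_ge0 => u _; apply: sumr_ge0 => w _; by case: (e u w).
Qed.

Lemma bound_small (V : finType) (e : rel V) (h : V)
  (hub : forall u, u != h -> e u h) (c : {ffun V -> int}) (B : int) :
  Tv e c <= B -> forall u, `|c u| <= `|Sm c| + (#|V|%:Z + 1) * B.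
Proof.
move=> HT.
have H1 : forall u, `|c u - c h| <= Tv e c.
  move=> u; case: (eqVneq u h) => [->|Hu]; first by rewrite subrr normr0 Tv_ge0.
  apply: le_trans (_ : \sum_w (if e u w then `|c u - c w| else 0) <= _).
    have := @single_le V (fun w => if e u w then `|c u - c w| else 0) h.
    rewrite hub //; apply => j; by case: (e u j).
  apply: (@single_le V (fun u => \sum_w (if e u w then `|c u - c w| else 0)) u).
  move=> j; apply: sumr_ge0 => w _; by case: (e j w).
set k := #|V|%:Z.
have k1 : 1 <= k.
  have : (0 < #|V|)%N by apply/card_gt0P; exists h.
  rewrite /k; lia.
have H2 : `|k * c h - Sm c| <= k * Tv e c.
  have -> : k * c h - Sm c = \sum_u (c h - c u).
    by rewrite big_split /= sumrN sumr_const /Sm -mulr_natl natz.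
  apply: le_trans (ler_norm_sum _ _ _) _.
  apply: le_trans (_ : \sum_(u : V) Tv e c <= _).
    apply: ler_sum => u _; rewrite distrC; exact: H1.
  by rewrite sumr_const -mulr_natl natz.
have H3 : k * Tv e c <= k * B by rewrite ler_wpM2l // (le_trans _ k1).
have H4 : `|k * c h| = k * `|c h| by rewrite normrM gtr0_norm // (lt_le_trans _ k1).
have H5 : `|c h| <= k * `|c h| by rewrite ler_peMl.
move=> u; have := H1 u; have := Tv_ge0 e c => H6 H7.
have H8 : Tv e c <= B := HT.
nia.
Qed.

Lemma En_bound (V : finType) (c : {ffun V -> int}) (R : int) :
  (forall u, `|c u| <= R) -> En c <= #|V|%:Z * R ^+ 2.
Proof.
move=> H; apply: le_trans (_ : \sum_(u : V) R ^+ 2 <= _).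
  apply: ler_sum => u _; have := H u; rewrite ler_norml => /andP [H1 H2]; nia.
by rewrite sumr_const -mulr_natl natz.
Qed.

Lemma sq_le_En (V : finType) (c : {ffun V -> int}) u : `|c u| <= En c.
Proof.
apply: le_trans (_ : c u ^+ 2 <= _).
  case: (ltrP (c u) 0) => H.
  - rewrite ltr0_norm //; nia.
  - rewrite ger0_norm //; nia.
apply: (@single_le V (fun u => c u ^+ 2) u) => j; exact: sqr_ge0.
Qed.

Lemma main_gen (V : finType) (e : rel V) (es : symmetric e) (h : V)
  (hub : forall u, u != h -> e u h) (c0 : {ffun V -> int}) :
  exists (t p : nat), (1 <= p)%N /\ diffusion e c0 (t + p) = diffusion e c0 t.
Proof.
pose c t := diffusion e c0 t.
have cS : forall t, c t.+1 = diffusion_step e (c t) by move=> t; rewrite /c /diffusion iterS.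
have Sc : forall t, Sm (c t) = Sm c0.
  elim=> [//|t IH]; by rewrite cS step_sum.
set k := #|V|%:Z.
have k0 : 0 <= k by [].
set R0 := `|Sm c0| + (k + 1) * k ^+ 3.
set M := En c0 + k * R0 ^+ 2 + k ^+ 3.
have HE : forall t, En (c t) <= M.
  have E0 : 0 <= En c0 by apply: sumr_ge0 => u _; exact: sqr_ge0.
  have P0 : 0 <= k * R0 ^+ 2 by rewrite mulr_ge0 // sqr_ge0.
  have P1 : 0 <= k ^+ 3 by rewrite exprn_ge0.
  elim=> [|t IH]; first by rewrite /c /= /M; lia.
  rewrite cS; have := energy_step es (c t); rewrite -/k => Hs.
  case: (lerP (Tv e (c t)) (k ^+ 3)) => HT.
  - have := bound_small hub HT; rewrite Sc -/k -/R0 => Hb.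
    have := En_bound Hb; rewrite -/k => HEn.
    have := Tv_ge0 e (c t); lia.
  - lia.
have HM : 0 <= M by apply: le_trans (HE 0%N); apply: sumr_ge0 => u _; exact: sqr_ge0.
have Hb : forall t u, `|c t u| <= (absz M)%:Z.
  move=> t u; rewrite gez0_abs //; apply: le_trans (sq_le_En (c t) u) (HE t).
have [i [j [Hij Hc]]] := pigeon Hb.
exists i, (j - i)%N; split; first lia.
rewrite subnKC; last lia.
by [].
Qed.

Lemma wheel_sym n : symmetric (@wheel_adj n).
Proof.
move=> i j; rewrite /wheel_adj.
case: (eqVneq (i : nat) n.-1) => Hi; case: (eqVneq (j : nat) n.-1) => Hj //=.
all: try by rewrite Hi Hj.
by rewrite orbC [(i : nat) == j]eq_sym.
Qed.

Theorem theorem9 (n : nat) (hn : (4 <= n)%N) (c0 : {ffun 'I_n -> int}) :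
  exists (t p : nat), (1 <= p)%N /\
    diffusion (@wheel_adj n) c0 (t + p) = diffusion (@wheel_adj n) c0 t.
Proof.
have hlt : (n.-1 < n)%N by lia.
apply: (@main_gen _ _ (@wheel_sym n) (Ordinal hlt)) => u Hu.
rewrite /wheel_adj /= eqxx.
have -> : ((u : nat) == n.-1) = false.
  apply/negbTE; apply: contra Hu => /eqP H; apply/eqP; exact: val_inj.
by [].
Qed.
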